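(* The connective $\to$ is not definable in $\textsf{INQ}^-$: there is no formula $\varphi(a,b)$ of $\textsf{INQ}^-$ such that for all formulas $\eta,\theta$ of $\textsf{INQ}^-$, $\varphi(\eta,\theta)\equiv\eta\to\theta$ (where $\varphi(\eta,\theta)$ is obtained by replacing each occurrence of $a$ with $\eta$ and each occurrence of $b$ with $\theta$).
   Context: $\textsf{INQ}^-$ is the propositional language built from countably many propositional letters using $\bot,\top$, unary $\neg,?$ and binary $\land$, $\vee$ (inquisitive disjunction), $\otimes$ (tensor); it does not contain $\to$. A model is $M=(W,V)$ with $V$ assigning to each world a set of letters. Support at $s\subseteq W$: $s\models p$ iff $p\in V(w)$ for all $w\in s$; $s\models\bot$ iff $s=\emptyset$; $s\models\top$ always; $s\models\psi\land\chi$ iff both; $s\models\psi\vee\chi$ iff $s\models\psi$ or $s\models\chi$; $s\models\psi\otimes\chi$ iff $s=t_1\cup t_2$ for some $t_1\models\psi$, $t_2\models\chi$; $s\models\psi\to\chi$ iff for all $t\subseteq s$, $t\models\psi$ implies $t\models\chi$; $s\models\neg\psi$ iff $s\models\psi\to\bot$; $s\models?\psi$ iff $s\models\psi$ or $s\models\neg\psi$. $\psi\equiv\chi$ means that in every model, $\psi$ and $\chi$ are supported by the same states. *)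

(* Defs.v *)
From Stdlib Require Import Arith.

Inductive form : Type :=
| Var : nat -> form
| Bot : form
| Top : form
| Neg : form -> form
| Quest : form -> form
| And : form -> form -> form
| Or : form -> form -> form
| Tensor : form -> form -> form.

Record model := { W : Type; V : W -> nat -> Prop }.

Definition state (M : model) := W M -> Prop.
Definition subst_of {M : model} (t s : state M) : Prop := forall w, t w -> s w.
Definition is_empty {M : model} (s : state M) : Prop := forall w, ~ s w.
Definition is_union {M : model} (s t1 t2 : state M) : Prop :=
  forall w, s w <-> (t1 w \/ t2 w).

Fixpoint supp (M : model) (s : state M) (f : form) : Prop :=
  match f with
  | Var p => forall w, s w -> V M w p
  | Bot => is_empty s
  | Top => True
  | Neg g => forall t : state M, subst_of t s -> supp M t g -> is_empty t
  | Quest g => supp M s g \/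
               (forall t : state M, subst_of t s -> supp M t g -> is_empty t)
  | And g h => supp M s g /\ supp M s h
  | Or g h => supp M s g \/ supp M s h
  | Tensor g h => exists t1 t2 : state M,
                    is_union s t1 t2 /\ supp M t1 g /\ supp M t2 h
  end.

(* Support of the implication eta -> theta (a connective of full INQ,
   not of INQ^-). *)
Definition supp_imp (M : model) (s : state M) (eta theta : form) : Prop :=
  forall t : state M, subst_of t s -> supp M t eta -> supp M t theta.

Fixpoint subst2 (a b : nat) (eta theta : form) (f : form) : form :=
  match f with
  | Var p => if Nat.eqb p a then eta else if Nat.eqb p b then theta else Var p
  | Bot => Bot
  | Top => Top
  | Neg g => Neg (subst2 a b eta theta g)
  | Quest g => Quest (subst2 a b eta theta g)
  | And g h => And (subst2 a b eta theta g) (subst2 a b eta theta h)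
  | Or g h => Or (subst2 a b eta theta g) (subst2 a b eta theta h)
  | Tensor g h => Tensor (subst2 a b eta theta g) (subst2 a b eta theta h)
  end.

Fixpoint letters_in (a b : nat) (f : form) : Prop :=
  match f with
  | Var p => p = a \/ p = b
  | Bot | Top => True
  | Neg g | Quest g => letters_in a b g
  | And g h | Or g h | Tensor g h => letters_in a b g /\ letters_in a b h
  end.

(* Main.v *)
Require Import Defs.
From Stdlib Require Import Arith Lia.

Inductive w3 : Type := A0 | A1 | A2.
Definition Vw (w : w3) (p : nat) : Prop :=
  match w with A0 => p = 0 \/ p = 1 | A1 => p = 0 | A2 => p = 1 \/ p = 2 end.
Definition M0 : model := {| W := w3; V := Vw |}.
Definition eta0 := Or (Var 0) (Var 1).
Definition theta0 := Or (Var 0) (Var 2).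

Inductive kind := KT | KB | KE | KH.
Definition sem (k : kind) (s : state M0) : Prop :=
  match k with KT => True | KB => is_empty s
  | KE => supp M0 s eta0 | KH => supp M0 s theta0 end.

Lemma L_empty : forall k s, is_empty s -> sem k s.
Proof.
  intros [] s H; simpl; auto; left; intros w Hw; destruct (H w Hw).
Qed.

Lemma L_down : forall k (t s : state M0), subst_of t s -> sem k s -> sem k t.
Proof.
  unfold subst_of, is_empty; intros [] t s Hts H; simpl in *; auto.
  - intros w Hw; apply (H w); auto.
  - destruct H as [H|H]; [left|right]; intros w Hw; apply H; auto.
  - destruct H as [H|H]; [left|right]; intros w Hw; apply H; auto.
Qed.

Lemma L_01 : forall k (t : state M0), k <> KB ->
  (forall w, t w -> w = A0 \/ w = A1) -> sem k t.
Proof.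
  intros [] t Hk H; simpl; auto; try congruence; left; intros w Hw;
  destruct (H w Hw) as [->| ->]; simpl; auto.
Qed.

Lemma L_2 : forall k (t : state M0), k <> KB ->
  (forall w, t w -> w = A2) -> sem k t.
Proof.
  intros [] t Hk H; simpl; auto; try congruence; right; intros w Hw;
  rewrite (H w Hw); simpl; auto.
Qed.

Lemma L_sing : forall k w, k <> KB -> sem k (fun x : W M0 => x = w).
Proof.
  intros k [] Hk; [apply L_01|apply L_01|apply L_2]; auto;
  intros w Hw; subst; auto.
Qed.

Lemma theta_eta : forall s, sem KH s -> sem KE s.
Proof.
  simpl; intros s [H|H]; [left; exact H|].
  right; intros w Hw; specialize (H w Hw); destruct w; simpl in *; lia.
Qed.

Definition kneg k := match k with KB => KT | _ => KB end.
Definition kq k := match k with KB => KT | k => k end.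
Definition kand k1 k2 := match k1, k2 with
  | KT, k | k, KT => k | KB, _ | _, KB => KB
  | KE, KE => KE | _, _ => KH end.
Definition kor k1 k2 := match k1, k2 with
  | KT, _ | _, KT => KT | KB, k | k, KB => k
  | KH, KH => KH | _, _ => KE end.
Definition kten k1 k2 := match k1, k2 with
  | KB, k | k, KB => k | _, _ => KT end.

Lemma neg_ok : forall k s,
  (forall t : state M0, subst_of t s -> sem k t -> is_empty t) <-> sem (kneg k) s.
Proof.
  intros k s; destruct k; cbn [kneg]; split; intros H.
  all: try exact I.
  all: try (intros t Hts Ht; exact Ht).
  all: try (intros w Hw; refine (H (fun x => x = w) _ _ w eq_refl);
       [intros x ->; exact Hw | apply L_sing; congruence]).
  all: try (intros t Hts _ w Hw; exact (H w (Hts w Hw))).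
Qed.

Lemma and_ok : forall k1 k2 s, (sem k1 s /\ sem k2 s) <-> sem (kand k1 k2) s.
Proof.
  intros [] [] s; simpl kand; split; intros H;
  repeat match goal with H : _ /\ _ |- _ => destruct H end;
  try (split; auto); try exact I; auto;
  try (apply L_empty; assumption);
  try (apply theta_eta; assumption).
Qed.

Lemma or_ok : forall k1 k2 s, (sem k1 s \/ sem k2 s) <-> sem (kor k1 k2) s.
Proof.
  intros [] [] s; simpl kor; split; intros H; try exact I; auto;
  try (destruct H as [H|H]; auto; fail);
  try (destruct H as [H|H]; first [assumption | apply L_empty; assumption | apply theta_eta; assumption]).
Qed.

Lemma ten_ok : forall k1 k2 s,
  (exists t1 t2 : state M0, is_union s t1 t2 /\ sem k1 t1 /\ sem k2 t2)
  <-> sem (kten k1 k2) s.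
Proof.
  intros k1 k2 s.
  assert (B1 : forall k, (exists t1 t2 : state M0, is_union s t1 t2 /\ sem KB t1 /\ sem k t2) <-> sem k s).
  { intro k; split.
    - intros [t1 [t2 [Hu [H1 H2]]]]. apply (L_down k s t2); auto.
      intros w Hw; destruct (proj1 (Hu w) Hw) as [h|h]; auto; destruct (H1 w h).
    - intros H; exists (fun _ => False), s; split; [|split].
      + intros x; simpl; tauto.
      + intros x hx; exact hx.
      + exact H. }
  assert (B2 : forall k, (exists t1 t2 : state M0, is_union s t1 t2 /\ sem k t1 /\ sem KB t2) <-> sem k s).
  { intro k; rewrite <- (B1 k); split; intros [t1 [t2 [Hu [H1 H2]]]];
    exists t2, t1; (split; [intros x; rewrite (Hu x); tauto | split; assumption]). }
  assert (T : forall k1 k2, k1 <> KB -> k2 <> KB ->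
     exists t1 t2 : state M0, is_union s t1 t2 /\ sem k1 t1 /\ sem k2 t2).
  { intros a b Ha Hb.
    exists (fun w => s w /\ (w = A0 \/ w = A1)), (fun w => s w /\ w = A2).
    split; [|split].
    - intros x; destruct x; simpl; split; intuition; discriminate.
    - apply L_01; auto; intros w [_ h]; exact h.
    - apply L_2; auto; intros w [_ h]; exact h. }
  destruct k1, k2; simpl kten;
  try (apply B1); try (apply B2);
  split; intros; try exact I; apply T; discriminate.
Qed.

Lemma ext_neg : forall (P Q : state M0 -> Prop) s, (forall s, P s <-> Q s) ->
  ((forall t, subst_of t s -> P t -> is_empty t) <-> (forall t, subst_of t s -> Q t -> is_empty t)).
Proof. intros P Q s H; split; intros H1 t Ht Hq; apply H1; auto; apply H; auto. Qed.

Theorem theorem3 :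
  forall (a b : nat), a <> b ->
  ~ (exists phi : form,
       letters_in a b phi /\
       forall eta theta : form,
         forall (M : model) (s : state M),
           supp M s (subst2 a b eta theta phi) <-> supp_imp M s eta theta).
Proof.
  intros a b hab [phi [Hl Hphi]].
  assert (Hc : forall phi, letters_in a b phi -> exists k, forall s,
     supp M0 s (subst2 a b eta0 theta0 phi) <-> sem k s).
  { clear phi Hl Hphi. induction phi; simpl; intros Hl.
    - destruct Hl as [->| ->].
      + rewrite Nat.eqb_refl; exists KE; tauto.
      + assert (E : Nat.eqb b a = false) by (apply Nat.eqb_neq; auto).
        rewrite E, Nat.eqb_refl; exists KH; tauto.
    - exists KB; tauto.
    - exists KT; tauto.
    - destruct (IHphi Hl) as [k Hk]; exists (kneg k); intros s.
      rewrite <- neg_ok; apply ext_neg; auto.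
    - destruct (IHphi Hl) as [k Hk]; exists (kq k); intros s.
      rewrite (ext_neg _ _ s Hk), neg_ok, Hk.
      destruct k; cbn [kq kneg]; split; intros H; auto; try exact I;
      try (destruct H as [H|H]; first [assumption | apply L_empty; assumption]).
    - destruct Hl as [H1 H2]; destruct (IHphi1 H1) as [k1 K1];
      destruct (IHphi2 H2) as [k2 K2]; exists (kand k1 k2); intros s.
      rewrite <- and_ok, K1, K2; tauto.
    - destruct Hl as [H1 H2]; destruct (IHphi1 H1) as [k1 K1];
      destruct (IHphi2 H2) as [k2 K2]; exists (kor k1 k2); intros s.
      rewrite <- or_ok, K1, K2; tauto.
    - destruct Hl as [H1 H2]; destruct (IHphi1 H1) as [k1 K1];
      destruct (IHphi2 H2) as [k2 K2]; exists (kten k1 k2); intros s.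
      rewrite <- ten_ok; split; intros [t1 [t2 [Hu [Ha Hb]]]];
      exists t1, t2; (split; [exact Hu | split; [apply K1 | apply K2]]; assumption). }
  destruct (Hc phi Hl) as [k Hk].
  assert (Hi : forall s, supp_imp M0 s eta0 theta0 <-> sem k s).
  { intros s; rewrite <- Hk; symmetry; apply Hphi. }
  set (s02 := (fun w => w = A0 \/ w = A2) : state M0).
  set (s12 := (fun w => w = A1 \/ w = A2) : state M0).
  assert (I12 : supp_imp M0 s12 eta0 theta0).
  { intros t Ht He; simpl in He |- *. destruct He as [H0|H1].
    - left; exact H0.
    - right; intros w Hw; destruct (Ht w Hw) as [->| ->]; simpl.
      + specialize (H1 A1 Hw); simpl in H1; lia.
      + auto. }
  assert (N02 : ~ supp_imp M0 s02 eta0 theta0).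
  { intros H. assert (Hs : supp M0 s02 eta0).
    { simpl; right; intros w [->| ->]; simpl; auto. }
    specialize (H s02 (fun w h => h) Hs); simpl in H.
    destruct H as [H|H].
    - specialize (H A2 (or_intror eq_refl)); simpl in H; lia.
    - specialize (H A0 (or_introl eq_refl)); simpl in H; lia. }
  destruct k.
  - apply N02; apply Hi; exact I.
  - apply Hi in I12; simpl in I12; apply (I12 A1); left; reflexivity.
  - apply Hi in I12; simpl in I12; destruct I12 as [H|H].
    + specialize (H A2 (or_intror eq_refl)); simpl in H; lia.
    + specialize (H A1 (or_introl eq_refl)); simpl in H; lia.
  - apply Hi in I12; simpl in I12; destruct I12 as [H|H].
    + specialize (H A2 (or_intror eq_refl)); simpl in H; lia.
    + specialize (H A1 (or_introl eq_refl)); simpl in H; lia.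
Qed.
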